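(* Let $(X,T)$ be a transitive topological dynamical system such that $\operatorname{supp}(X,T)\ne\mathrm{Fix}(X,T^n)$ for every $n\in\mathbb{N}$. Then for every $x\in X$ the Banach proximal cell $BP(x)=\{y\in X:(x,y)\text{ is Banach proximal}\}$ has empty interior.
   Context: A topological dynamical system $(X,T)$ consists of a non-empty compact metric space $(X,d)$ and a continuous map $T:X\to X$. It is transitive if for all non-empty open $U,V\subset X$ the set $\{n\ge0: U\cap T^{-n}V\ne\emptyset\}$ is infinite. $\mathrm{Fix}(X,T^n)=\{x\in X: T^nx=x\}$. A set $F\subset\mathbb{Z}_+$ has Banach density one if for every $\lambda<1$ there is $N\ge1$ with $\#(F\cap I)\ge\lambda\,\#(I)$ for every interval of integers $I\subset\mathbb{Z}_+$ with $\#(I)\ge N$. A pair $(x,y)$ is Banach proximal if for every $\varepsilon>0$ the set $\{n\in\mathbb{Z}_+: d(T^nx,T^ny)<\varepsilon\}$ has Banach density one. $\operatorname{supp}(X,T)$ is the smallest closed set $C\subset X$ with $\mu(C)=1$ for all $T$-invariant Borel probability measures $\mu$. *)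

(* Defs.v *)
From Stdlib Require Import Reals List.
Open Scope R_scope.

Definition is_metric {X : Type} (d : X -> X -> R) : Prop :=
  (forall x y, 0 <= d x y) /\
  (forall x y, d x y = 0 <-> x = y) /\
  (forall x y, d x y = d y x) /\
  (forall x y z, d x z <= d x y + d y z).

Definition is_open {X : Type} (d : X -> X -> R) (U : X -> Prop) : Prop :=
  forall x, U x -> exists eps, 0 < eps /\ forall y, d x y < eps -> U y.

Definition is_closed {X : Type} (d : X -> X -> R) (C : X -> Prop) : Prop :=
  is_open d (fun x => ~ C x).

Definition is_compact {X : Type} (d : X -> X -> R) : Prop :=
  forall (I : Type) (U : I -> X -> Prop),
    (forall i, is_open d (U i)) ->
    (forall x, exists i, U i x) ->
    exists l : list I, forall x, exists i, In i l /\ U i x.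

Definition is_continuous {X : Type} (d : X -> X -> R) (T : X -> X) : Prop :=
  forall x eps, 0 < eps -> exists delta, 0 < delta /\
    forall y, d x y < delta -> d (T x) (T y) < eps.

Definition iterT {X : Type} (T : X -> X) (n : nat) (x : X) : X := Nat.iter n T x.

(* transitivity: N(U,V) = {n >= 0 : U ∩ T^{-n} V ≠ ∅} is infinite *)
Definition is_transitive {X : Type} (d : X -> X -> R) (T : X -> X) : Prop :=
  forall U V : X -> Prop, is_open d U -> is_open d V ->
    (exists x, U x) -> (exists x, V x) ->
    forall N : nat, exists n : nat, (N <= n)%nat /\ exists x, U x /\ V (iterT T n x).

Definition Fix {X : Type} (T : X -> X) (n : nat) (x : X) : Prop := iterT T n x = x.

Definition is_sigma_algebra {X : Type} (S : (X -> Prop) -> Prop) : Prop :=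
  S (fun _ => True) /\
  (forall A, S A -> S (fun x => ~ A x)) /\
  (forall A : nat -> X -> Prop, (forall n, S (A n)) -> S (fun x => exists n, A n x)).

Definition is_Borel {X : Type} (d : X -> X -> R) (B : X -> Prop) : Prop :=
  forall S : (X -> Prop) -> Prop, is_sigma_algebra S ->
    (forall U, is_open d U -> S U) -> S B.

(* mu is a Borel probability measure (values off the Borel sets are irrelevant) *)
Definition is_Borel_prob {X : Type} (d : X -> X -> R) (mu : (X -> Prop) -> R) : Prop :=
  (forall B, is_Borel d B -> 0 <= mu B) /\
  mu (fun _ => True) = 1 /\
  (forall B : nat -> X -> Prop,
     (forall n, is_Borel d (B n)) ->
     (forall m n x, m <> n -> B m x -> B n x -> False) ->
     infinite_sum (fun n => mu (B n)) (mu (fun x => exists n, B n x))).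

Definition is_invariant_prob {X : Type} (d : X -> X -> R) (T : X -> X)
  (mu : (X -> Prop) -> R) : Prop :=
  is_Borel_prob d mu /\
  forall B, is_Borel d B -> mu (fun x => B (T x)) = mu B.

(* supp(X,T): the smallest closed set of full measure for every invariant
   measure, written as the intersection of all such closed sets. *)
Definition supp {X : Type} (d : X -> X -> R) (T : X -> X) (x : X) : Prop :=
  forall C : X -> Prop, is_closed d C ->
    (forall mu, is_invariant_prob d T mu -> mu C = 1) -> C x.

Definition banach_density_one (F : nat -> Prop) : Prop :=
  forall lambda : R, lambda < 1 ->
    exists N : nat, (1 <= N)%nat /\
      forall a L : nat, (N <= L)%nat ->
        exists l : list nat, NoDup l /\
          (forall k, In k l -> (a <= k < a + L)%nat /\ F k) /\
          lambda * INR L <= INR (length l).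

Definition banach_proximal {X : Type} (d : X -> X -> R) (T : X -> X) (x y : X) : Prop :=
  forall eps, 0 < eps ->
    banach_density_one (fun n => d (iterT T n x) (iterT T n y) < eps).

Definition BP {X : Type} (d : X -> X -> R) (T : X -> X) (x : X) (y : X) : Prop :=
  banach_proximal d T x y.

Definition empty_interior {X : Type} (d : X -> X -> R) (A : X -> Prop) : Prop :=
  forall U : X -> Prop, is_open d U -> (forall y, U y -> A y) -> forall y, ~ U y.

(* Main.v *)
Require Import Defs.
From Stdlib Require Import Reals List Lia Lra ClassicalEpsilon Classical FunctionalExtensionality PropExtensionality.
Open Scope R_scope.

Definition indR (P : Prop) : R := if excluded_middle_informative P then 1 else 0.
Definition indn (P : Prop) : nat := if excluded_middle_informative P then 1%nat else 0%nat.

Fixpoint cnt (P : nat -> Prop) (a L : nat) : nat :=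
  match L with 0%nat => 0%nat | S L' => (indn (P a) + cnt P (S a) L')%nat end.

Fixpoint rsum (f : nat -> R) (L : nat) : R :=
  match L with 0%nat => 0 | S L' => f 0%nat + rsum (fun k => f (S k)) L' end.

Lemma indn_le (P : Prop) : (indn P <= 1)%nat.
Proof. unfold indn; destruct excluded_middle_informative; lia. Qed.

Lemma cnt_le (P : nat -> Prop) L : forall a, (cnt P a L <= L)%nat.
Proof. induction L; intros a; simpl; [lia|]. pose proof (indn_le (P a)); specialize (IHL (S a)); lia. Qed.

Lemma cnt_shift_mono (P Q : nat -> Prop) L : forall a b,
  (forall i, (i < L)%nat -> P (a + i)%nat -> Q (b + i)%nat) -> (cnt P a L <= cnt Q b L)%nat.
Proof.
  induction L; intros a b H; simpl; [lia|].
  assert (H1 : (cnt P (S a) L <= cnt Q (S b) L)%nat).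
  { apply IHL; intros i Hi Hp. replace (S b + i)%nat with (b + S i)%nat by lia.
    apply H; [lia|]. replace (a + S i)%nat with (S a + i)%nat by lia. exact Hp. }
  assert (H2 : (indn (P a) <= indn (Q b))%nat).
  { unfold indn; destruct (excluded_middle_informative (P a)) as [p|p];
    destruct (excluded_middle_informative (Q b)) as [q|q]; try lia.
    exfalso; apply q; replace b with (b+0)%nat by lia; apply H; [lia|]; now replace (a+0)%nat with a by lia. }
  lia.
Qed.

Lemma cnt_mono (P Q : nat -> Prop) L a :
  (forall k, P k -> Q k) -> (cnt P a L <= cnt Q a L)%nat.
Proof. intros H; apply cnt_shift_mono; auto. Qed.

Lemma cnt_compl (P : nat -> Prop) L : forall a, (cnt P a L + cnt (fun k => ~ P k) a L = L)%nat.
Proof.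
  induction L; intros a; simpl; [lia|]. specialize (IHL (S a)).
  unfold indn; destruct (excluded_middle_informative (P a)); destruct (excluded_middle_informative (~ P a)); tauto || lia.
Qed.

Lemma cnt_or (P Q : nat -> Prop) L : forall a,
  (cnt (fun k => P k \/ Q k) a L <= cnt P a L + cnt Q a L)%nat.
Proof.
  induction L; intros a; simpl; [lia|]. specialize (IHL (S a)).
  unfold indn; destruct (excluded_middle_informative (P a \/ Q a));
  destruct (excluded_middle_informative (P a)); destruct (excluded_middle_informative (Q a)); try lia; tauto.
Qed.

Lemma cnt_filter (P : nat -> Prop) L : forall a,
  cnt P a L = length (filter (fun k => if excluded_middle_informative (P k) then true else false) (seq a L)).
Proof.
  induction L; intros a; simpl; [auto|]. rewrite IHL. unfold indn.
  destruct (excluded_middle_informative (P a)); simpl; auto.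
Qed.

Lemma list_cnt (P : nat -> Prop) (l : list nat) a L :
  NoDup l -> (forall k, In k l -> (a <= k < a + L)%nat /\ P k) -> (length l <= cnt P a L)%nat.
Proof.
  intros Hnd Hin. rewrite cnt_filter. apply NoDup_incl_length; auto.
  intros k Hk. destruct (Hin k Hk) as [Hr Hp]. apply filter_In. split.
  - apply in_seq. lia.
  - destruct excluded_middle_informative; tauto.
Qed.

Lemma bd1_cnt (F : nat -> Prop) : banach_density_one F ->
  forall lambda, lambda < 1 -> exists N, (1 <= N)%nat /\ forall a L, (N <= L)%nat ->
    lambda * INR L <= INR (cnt F a L).
Proof.
  intros H lam Hl. destruct (H lam Hl) as [N [HN H2]]. exists N; split; auto.
  intros a L HL. destruct (H2 a L HL) as [l [Hnd [Hin Hle]]].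
  eapply Rle_trans; [exact Hle|]. apply le_INR. apply list_cnt; auto.
Qed.

Lemma rsum_const c L : rsum (fun _ => c) L = INR L * c.
Proof. induction L; simpl rsum; [simpl; lra|]. rewrite IHL, S_INR. lra. Qed.

Lemma rsum_plus L : forall f g, rsum (fun k => f k + g k) L = rsum f L + rsum g L.
Proof. induction L; intros f g; simpl; [lra|]. rewrite (IHL (fun k => f (S k)) (fun k => g (S k))). lra. Qed.

Lemma rsum_ext L : forall f g, (forall k, (k < L)%nat -> f k = g k) -> rsum f L = rsum g L.
Proof. induction L; intros f g H; simpl; auto. rewrite (H 0%nat) by lia. f_equal. apply IHL. intros k Hk; apply H; lia. Qed.

Lemma rsum_last L : forall f, rsum f (S L) = rsum f L + f L.
Proof. induction L; intros f; simpl; [lra|]. simpl in IHL. rewrite (IHL (fun k => f (S k))). lra. Qed.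

Lemma rsum_le L : forall f g, (forall k, f k <= g k) -> rsum f L <= rsum g L.
Proof. induction L; intros f g H; simpl; [lra|]. pose proof (H 0%nat). pose proof (IHL (fun k => f (S k)) (fun k => g (S k)) (fun k => H (S k))). lra. Qed.

Lemma rsum_scal L : forall c f, rsum (fun k => c * f k) L = c * rsum f L.
Proof. induction L; intros c f; simpl; [lra|]. rewrite IHL. lra. Qed.

Lemma sum_f_plus (a b : nat -> R) n : sum_f_R0 (fun i => a i + b i) n = sum_f_R0 a n + sum_f_R0 b n.
Proof. induction n; simpl; [lra|]. rewrite IHn. lra. Qed.

Lemma sum_f_scal (a : nat -> R) c n : sum_f_R0 (fun i => c * a i) n = c * sum_f_R0 a n.
Proof. induction n; simpl; [lra|]. rewrite IHn. lra. Qed.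

Lemma inf_sum_plus a b la lb : infinite_sum a la -> infinite_sum b lb ->
  infinite_sum (fun i => a i + b i) (la + lb).
Proof.
  intros Ha Hb. pose proof (CV_plus _ _ _ _ Ha Hb) as H.
  intros eps He. destruct (H eps He) as [N HN]. exists N. intros n Hn.
  rewrite sum_f_plus. apply HN; auto.
Qed.

Lemma inf_sum_scal a la c : infinite_sum a la -> infinite_sum (fun i => c * a i) (c * la).
Proof.
  intros Ha. assert (Hc : Un_cv (fun _ => c) c).
  { intros eps He; exists 0%nat; intros; unfold Rdist; rewrite Rminus_diag, Rabs_R0; lra. }
  pose proof (CV_mult _ _ _ _ Hc Ha) as H.
  intros eps He. destruct (H eps He) as [N HN]. exists N. intros n Hn.
  rewrite sum_f_scal. apply HN; auto.
Qed.

Lemma inf_sum_zero : infinite_sum (fun _ => 0) 0.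
Proof.
  intros eps He; exists 0%nat; intros n _. assert (sum_f_R0 (fun _ => 0) n = 0).
  { induction n; simpl; [lra|]. rewrite IHn; lra. }
  rewrite H; unfold Rdist; rewrite Rminus_diag, Rabs_R0; lra.
Qed.

Lemma inf_sum_const c : infinite_sum (fun _ => c) c -> c = 0.
Proof.
  intros H. destruct (Req_dec c 0) as [|Hc]; auto. exfalso.
  assert (He : Rabs c / 2 > 0) by (pose proof (Rabs_pos_lt c Hc); lra).
  destruct (H _ He) as [N HN]. pose proof (HN N (le_n _)) as H1. pose proof (HN (S N) (le_S _ _ (le_n _))) as H2.
  unfold Rdist in *. simpl sum_f_R0 in H2.
  set (s := sum_f_R0 (fun _ => c) N) in *.
  assert (Rabs c <= Rabs (s + c - c) + Rabs (s - c)).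
  { replace c with ((s + c - c) - (s - c)) at 1 by ring. unfold Rminus at 1. eapply Rle_trans; [apply Rabs_triang|]. rewrite Rabs_Ropp. lra. }
  lra.
Qed.

Lemma inf_sum_rsum n : forall (g : nat -> nat -> R) (h : nat -> R),
  (forall i, infinite_sum (g i) (h i)) ->
  infinite_sum (fun j => rsum (fun i => g i j) n) (rsum h n).
Proof.
  induction n; intros g h H; simpl.
  - apply inf_sum_zero.
  - apply inf_sum_plus; [auto|]. apply (IHn (fun i => g (S i)) (fun i => h (S i))); auto.
Qed.

Lemma dirac_sum (B : nat -> Prop) : (forall m n, m <> n -> B m -> B n -> False) ->
  infinite_sum (fun j => indR (B j)) (indR (exists j, B j)).
Proof.
  intros Hdis. unfold indR at 2. destruct (excluded_middle_informative (exists j, B j)) as [[j0 Hj0]|Hno].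
  - assert (Hs : forall n, (j0 <= n)%nat -> sum_f_R0 (fun j => indR (B j)) n = 1).
    { induction n; intros Hn.
      - assert (j0 = 0%nat) by lia; subst. simpl; unfold indR; destruct excluded_middle_informative; tauto.
      - destruct (Nat.eq_dec j0 (S n)) as [e|ne].
        + subst. simpl. assert (sum_f_R0 (fun j => indR (B j)) n = 0).
          { clear IHn Hn. assert (forall m, (m <= n)%nat -> sum_f_R0 (fun j => indR (B j)) m = 0).
            { induction m; intros Hm.
              - simpl. unfold indR. destruct excluded_middle_informative as [b|]; [|lra].
                exfalso; apply (Hdis 0%nat (S n)); auto; lia.
              - simpl. rewrite IHm by lia. unfold indR. destruct excluded_middle_informative as [b|]; [|lra].
                exfalso; apply (Hdis (S m) (S n)); auto; lia. }
            auto. }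
          rewrite H. unfold indR; destruct excluded_middle_informative; tauto || lra.
        + simpl. rewrite IHn by lia. unfold indR; destruct excluded_middle_informative as [b|]; [exfalso; apply (Hdis (S n) j0); auto|]; lra. }
    intros eps He; exists j0; intros n Hn; rewrite Hs by lia; unfold Rdist; rewrite Rminus_diag, Rabs_R0; lra.
  - replace (fun j => indR (B j)) with (fun _ : nat => 0). apply inf_sum_zero.
    apply functional_extensionality; intro j; unfold indR; destruct excluded_middle_informative; [exfalso; eauto|auto].
Qed.

Ltac seteq := apply functional_extensionality; intro; apply propositional_extensionality.

Lemma ball_open {X} (d : X -> X -> R) (Hm : is_metric d) c r : is_open d (fun y => d c y < r).
Proof.
  destruct Hm as [H0 [H1 [H2 H3]]]. intros x Hx. exists (r - d c x); split; [lra|].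
  intros y Hy. pose proof (H3 c x y). lra.
Qed.

Lemma cball_closed {X} (d : X -> X -> R) (Hm : is_metric d) c r : is_closed d (fun y => d c y <= r).
Proof.
  destruct Hm as [H0 [H1 [H2 H3]]]. intros x Hx. exists (d c x - r); split; [lra|].
  intros y Hy Hc. pose proof (H3 c y x). rewrite (H2 y x) in H. lra.
Qed.

Lemma iter_cont {X} (d : X -> X -> R) T : is_continuous d T -> forall k x eps, 0 < eps ->
  exists delta, 0 < delta /\ forall y, d x y < delta -> d (iterT T k x) (iterT T k y) < eps.
Proof.
  intros Hc k. induction k; intros x eps He.
  - exists eps; split; auto.
  - destruct (Hc (iterT T k x) eps He) as [d1 [Hd1 H1]]. destruct (IHk x d1 Hd1) as [d2 [Hd2 H2]].
    exists d2; split; auto. intros y Hy. apply H1. apply H2; auto.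
Qed.

Lemma finite_delta {X} (d : X -> X -> R) (Q : nat -> X -> Prop) x L :
  (forall k, (k < L)%nat -> exists delta, 0 < delta /\ forall y, d x y < delta -> Q k y) ->
  exists delta, 0 < delta /\ forall y, d x y < delta -> forall k, (k < L)%nat -> Q k y.
Proof.
  induction L; intros H.
  - exists 1; split; [lra|]. intros; lia.
  - destruct IHL as [d1 [Hd1 H1]]. { intros k Hk; apply H; lia. }
    destruct (H L (le_n _)) as [d2 [Hd2 H2]].
    exists (Rmin d1 d2); split. { apply Rmin_glb_lt; auto. }
    intros y Hy k Hk. destruct (Nat.eq_dec k L).
    + subst. apply H2. eapply Rlt_le_trans; [exact Hy| apply Rmin_r].
    + apply H1; [eapply Rlt_le_trans; [exact Hy| apply Rmin_l]|lia].
Qed.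

Lemma preim_open {X} (d : X -> X -> R) T (Hc : is_continuous d T) k V :
  is_open d V -> is_open d (fun y => V (iterT T k y)).
Proof.
  intros HV x Hx. destruct (HV _ Hx) as [e [He H]]. destruct (iter_cont d T Hc k x e He) as [de [Hde H2]].
  exists de; split; auto.
Qed.

Lemma Borel_open {X} (d : X -> X -> R) U : is_open d U -> is_Borel d U.
Proof. intros HU S HS Ho. auto. Qed.

Lemma Borel_compl {X} (d : X -> X -> R) A : is_Borel d A -> is_Borel d (fun x => ~ A x).
Proof. intros HA S HS Ho. apply HS. apply HA; auto. Qed.

Lemma Borel_True {X} (d : X -> X -> R) : is_Borel d (fun _ : X => True).
Proof. intros S HS Ho. apply HS. Qed.

Lemma Borel_or {X} (d : X -> X -> R) A B : is_Borel d A -> is_Borel d B -> is_Borel d (fun x => A x \/ B x).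
Proof.
  intros HA HB S HS Ho.
  replace (fun x => A x \/ B x) with (fun x => exists n, (match n with 0%nat => A | _ => B end) x).
  - apply HS. intros [|n]; [apply HA|apply HB]; auto.
  - seteq. split. + intros [[|n] Hn]; auto. + intros [H|H]; [exists 0%nat|exists 1%nat]; auto.
Qed.

Lemma Borel_and {X} (d : X -> X -> R) A B : is_Borel d A -> is_Borel d B -> is_Borel d (fun x => A x /\ B x).
Proof.
  intros HA HB.
  replace (fun x => A x /\ B x) with (fun x => ~ ((fun y => ~ A y \/ ~ B y) x)).
  - apply Borel_compl, Borel_or; apply Borel_compl; auto.
  - seteq. simpl. split; [intros H; apply not_or_and in H; destruct H; split; apply NNPP; auto|tauto].
Qed.

Lemma mu_empty {X} (d : X -> X -> R) mu : is_Borel_prob d mu -> mu (fun _ => False) = 0.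
Proof.
  intros [H0 [H1 H2]]. specialize (H2 (fun _ _ => False)). cbv beta in H2.
  replace (fun x : X => exists n : nat, False) with (fun _ : X => False) in H2.
  - apply inf_sum_const. apply H2; [|tauto]. intros n. apply (Borel_open d). intros x [].
  - seteq. split; [tauto|intros [_ []]].
Qed.

Lemma mu_add {X} (d : X -> X -> R) mu : is_Borel_prob d mu -> forall A B,
  is_Borel d A -> is_Borel d B -> (forall x, A x -> B x -> False) ->
  mu (fun x => A x \/ B x) = mu A + mu B.
Proof.
  intros Hmu A B HA HB Hd. pose proof (mu_empty d mu Hmu) as He. destruct Hmu as [H0 [H1 H2]].
  set (F := fun n => match n with 0%nat => A | 1%nat => B | _ => fun _ : X => False end).
  assert (Hs : infinite_sum (fun n => mu (F n)) (mu (fun x => exists n, F n x))).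
  { apply H2.
    - intros [|[|n]]; simpl; auto. apply (Borel_open d). intros x [].
    - intros [|[|m]] [|[|n]] x Hmn; simpl; try tauto; try (intros; eauto); lia. }
  replace (fun x => exists n, F n x) with (fun x => A x \/ B x) in Hs.
  - eapply uniqueness_sum; [exact Hs|]. intros eps Heps. exists 1%nat. intros n Hn.
    assert (sum_f_R0 (fun n => mu (F n)) n = mu A + mu B).
    { induction n; [lia|]. destruct n; [simpl; auto|]. simpl sum_f_R0 in *. rewrite IHn by lia. simpl. rewrite He. ring. }
    rewrite H; unfold Rdist; rewrite Rminus_diag, Rabs_R0; lra.
  - seteq. split.
    + intros [H|H]; [exists 0%nat|exists 1%nat]; auto.
    + intros [[|[|n]] Hn]; simpl in Hn; tauto.
Qed.

Lemma mu_split {X} (d : X -> X -> R) mu : is_Borel_prob d mu -> forall A S,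
  is_Borel d A -> is_Borel d S ->
  mu A = mu (fun x => A x /\ S x) + mu (fun x => A x /\ ~ S x).
Proof.
  intros Hmu A S HA HS. rewrite <- (mu_add d mu Hmu).
  - f_equal. seteq. destruct (classic (S x)); tauto.
  - apply Borel_and; auto.
  - apply Borel_and; auto. apply Borel_compl; auto.
  - tauto.
Qed.

Lemma mu_nonneg {X} (d : X -> X -> R) mu : is_Borel_prob d mu -> forall A, is_Borel d A -> 0 <= mu A.
Proof. intros [H _]; auto. Qed.

Lemma meas_count {X} (d : X -> X -> R) mu (Hmu : is_Borel_prob d mu) L :
  forall (A : nat -> X -> Prop), (forall k, is_Borel d (A k)) ->
  forall (m : R) (D : X -> Prop), is_Borel d D ->
  (forall w, D w -> INR (cnt (fun k => A k w) 0 L) <= m) ->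
  rsum (fun k => mu (fun w => A k w /\ D w)) L <= m * mu D.
Proof.
  induction L; intros A HA m D HD Hc.
  - simpl. destruct (Rle_dec 0 m).
    + pose proof (mu_nonneg d mu Hmu D HD). nra.
    + replace D with (fun _ : X => False). { rewrite (mu_empty d mu Hmu). lra. }
      seteq. split; [tauto|]. intros Hx. specialize (Hc _ Hx). simpl in Hc. lra.
  - simpl rsum.
    set (D1 := fun w => A 0%nat w /\ D w). set (D2 := fun w => ~ A 0%nat w /\ D w).
    assert (HB1 : is_Borel d D1) by (apply Borel_and; auto).
    assert (HB2 : is_Borel d D2) by (apply Borel_and; auto; apply Borel_compl; auto).
    assert (Hsp : forall k, mu (fun w => A (S k) w /\ D w) =
       mu (fun w => A (S k) w /\ D1 w) + mu (fun w => A (S k) w /\ D2 w)).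
    { intros k. rewrite (mu_split d mu Hmu _ (A 0%nat)); auto. 2: apply Borel_and; auto.
      unfold D1, D2. f_equal; f_equal; seteq; tauto. }
    rewrite (rsum_ext _ _ (fun k => mu (fun w => A (S k) w /\ D1 w) + mu (fun w => A (S k) w /\ D2 w)))
      by (intros; apply Hsp).
    rewrite rsum_plus.
    assert (HI1 := IHL (fun k => A (S k)) (fun k => HA (S k)) (m - 1) D1 HB1).
    assert (HI2 := IHL (fun k => A (S k)) (fun k => HA (S k)) m D2 HB2).
    assert (Hcs : forall w, cnt (fun k => A k w) 1 L = cnt (fun k => A (S k) w) 0 L).
    { intros w. apply Nat.le_antisymm; apply cnt_shift_mono; intros i _ Hi; auto. }
    assert (HDs : mu D = mu D1 + mu D2).
    { rewrite (mu_split d mu Hmu D (A 0%nat)); auto. unfold D1, D2. f_equal; f_equal; seteq; tauto. }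
    assert (H0 : mu (fun w => A 0%nat w /\ D w) = mu D1) by reflexivity.
    assert (HI1' : rsum (fun k => mu (fun w => A (S k) w /\ D1 w)) L <= (m - 1) * mu D1).
    { apply HI1. intros w [Ha Hd]. specialize (Hc w Hd). simpl in Hc. rewrite Hcs in Hc.
      unfold indn in Hc. destruct excluded_middle_informative; [|tauto]. rewrite plus_INR in Hc. simpl in Hc. lra. }
    assert (HI2' : rsum (fun k => mu (fun w => A (S k) w /\ D2 w)) L <= m * mu D2).
    { apply HI2. intros w [Ha Hd]. specialize (Hc w Hd). simpl in Hc. rewrite Hcs in Hc.
      unfold indn in Hc. destruct excluded_middle_informative; [tauto|]. simpl in Hc. lra. }
    rewrite HDs. change (mu D1 + (rsum (fun k => mu (fun w => A (S k) w /\ D1 w)) L + rsum (fun k => mu (fun w => A (S k) w /\ D2 w)) L) <= m * (mu D1 + mu D2)). lra.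
Qed.

Lemma rsum_ind_le L : forall (P : nat -> Prop), rsum (fun i => indR (P i)) L <= INR L.
Proof.
  intros P. rewrite <- (Rmult_1_r (INR L)), <- rsum_const. apply rsum_le.
  intros k; unfold indR; destruct excluded_middle_informative; lra.
Qed.

Lemma rsum_ind_ge0 L : forall (P : nat -> Prop), 0 <= rsum (fun i => indR (P i)) L.
Proof.
  intros P. replace 0 with (rsum (fun _ => 0) L) by (rewrite rsum_const; ring). apply rsum_le.
  intros k; unfold indR; destruct excluded_middle_informative; lra.
Qed.

Lemma fix_supp {X} (d : X -> X -> R) T n p : (1 <= n)%nat -> Fix T n p -> supp d T p.
Proof.
  intros Hn Hp C HC Hfull.
  set (mu := fun B : X -> Prop => (1 / INR n) * rsum (fun i => indR (B (iterT T i p))) n).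
  assert (Hnpos : 0 < INR n) by (apply lt_0_INR; lia).
  assert (Hinv : is_invariant_prob d T mu).
  { split; [split; [|split]|].
    - intros B _. unfold mu. apply Rmult_le_pos; [apply Rlt_le; unfold Rdiv; rewrite Rmult_1_l; apply Rinv_0_lt_compat; auto|apply rsum_ind_ge0].
    - unfold mu. rewrite (rsum_ext _ _ (fun _ => 1)). 2:{ intros; unfold indR; destruct excluded_middle_informative; tauto. }
      rewrite rsum_const. field. lra.
    - intros Bs _ Hdis. unfold mu. apply inf_sum_scal.
      apply (inf_sum_rsum n (fun i j => indR (Bs j (iterT T i p))) (fun i => indR (exists j, Bs j (iterT T i p)))).
      intros i. apply dirac_sum. intros m k Hmk; apply Hdis; auto.
    - intros B _. unfold mu. f_equal. destruct n as [|n']; [lia|].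
      set (f := fun i => indR (B (iterT T i p))).
      change (rsum (fun i => f (S i)) (S n') = rsum f (S n')).
      rewrite rsum_last. simpl rsum at 2.
      assert (f (S n') = f 0%nat). { unfold f. unfold Fix in Hp. rewrite Hp. reflexivity. }
      lra. }
  specialize (Hfull mu Hinv). destruct (classic (C p)) as [|Hnc]; auto. exfalso.
  unfold mu in Hfull. destruct n as [|n']; [lia|]. simpl rsum in Hfull.
  assert (H : indR (C p) = 0) by (unfold indR; destruct excluded_middle_informative; [contradiction|auto]).
  pose proof (rsum_ind_le n' (fun i => C (T (iterT T i p)))) as H0. rewrite S_INR in *.
  rewrite H in Hfull. set (s := rsum (fun k : nat => indR (C (T (iterT T k p)))) n') in *.
  apply (Rmult_eq_compat_l (INR n' + 1)) in Hfull.
  replace ((INR n' + 1) * (1 / (INR n' + 1) * (0 + s))) with s in Hfull by (field; lra). lra.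
Qed.

Lemma nested_compact {X} (d : X -> X -> R) (Hc : is_compact d) (K : nat -> X -> Prop) :
  (forall k, is_closed d (K k)) -> (forall k, exists x, K k x) -> (forall k x, K (S k) x -> K k x) ->
  exists x, forall k, K k x.
Proof.
  intros Hcl Hne Hnest. apply NNPP; intros Hno.
  assert (Hcov : forall x, exists k, ~ K k x).
  { intros x. apply NNPP; intros H. apply Hno. exists x. intros k. apply NNPP. intros H'. apply H; eauto. }
  destruct (Hc nat (fun k x => ~ K k x) Hcl Hcov) as [l Hl].
  destruct (Hne (list_max l)) as [y Hy]. destruct (Hl y) as [i [Hi Hni]].
  assert (Hle : (i <= list_max l)%nat).
  { assert (H := proj1 (list_max_le l (list_max l)) (le_n _)). rewrite Forall_forall in H. auto. }
  apply Hni. clear Hi Hl Hni. induction Hle; auto.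
Qed.

Lemma baire {X} (d : X -> X -> R) (Hm : is_metric d) (Hc : is_compact d) (O : X -> Prop) (E : nat -> X -> Prop) :
  is_open d O -> (exists x, O x) -> (forall N, is_closed d (E N)) -> (forall x, O x -> exists N, E N x) ->
  exists N c r, 0 < r /\ forall y, d c y < r -> E N y.
Proof.
  intros HO [x0 Hx0] HE Hcov. apply NNPP; intros Hno.
  pose proof Hm as [Hm0 [Hm1 [Hm2 Hm3]]].
  assert (H : forall k (p : X * R), exists q : X * R, 0 < snd p ->
     0 < snd q /\ forall y, d (fst q) y <= snd q -> d (fst p) y < snd p /\ ~ E k y).
  { intros k [c r]. destruct (Rlt_dec 0 r) as [Hr|Hr]; [|exists (c, r); simpl; lra].
    assert (Hz : exists z, d c z < r /\ ~ E k z).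
    { apply NNPP; intros Hz. apply Hno. exists k, c, r. split; auto. intros y Hy. apply NNPP; intros Hy'. apply Hz; eauto. }
    destruct Hz as [z [Hz1 Hz2]]. destruct (HE k z Hz2) as [de [Hde Hd]].
    exists (z, Rmin de (r - d c z) / 2). simpl. intros _. split.
    - assert (0 < Rmin de (r - d c z)) by (apply Rmin_glb_lt; lra). lra.
    - intros y Hy. pose proof (Rmin_l de (r - d c z)). pose proof (Rmin_r de (r - d c z)).
      assert (0 < Rmin de (r - d c z)) by (apply Rmin_glb_lt; lra).
      split; [pose proof (Hm3 c z y); lra|]. apply Hd. lra. }
  set (step := fun k p => proj1_sig (constructive_indefinite_description _ (H k p))).
  assert (Hstep : forall k p, 0 < snd p -> 0 < snd (step k p) /\
     forall y, d (fst (step k p)) y <= snd (step k p) -> d (fst p) y < snd p /\ ~ E k y).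
  { intros k p. exact (proj2_sig (constructive_indefinite_description _ (H k p))). }
  destruct (HO x0 Hx0) as [e0 [He0 Hball]].
  set (sq := fix sq k := match k with 0%nat => (x0, e0) | S k' => step k' (sq k') end).
  assert (Hpos : forall k, 0 < snd (sq k)).
  { induction k; simpl; auto. apply Hstep; auto. }
  destruct (nested_compact d Hc (fun k y => d (fst (sq k)) y <= snd (sq k))) as [p Hp].
  - intros k; apply cball_closed; auto.
  - intros k; exists (fst (sq k)). rewrite (proj2 (Hm1 _ _) eq_refl). apply Rlt_le, Hpos.
  - intros k y Hy. apply Rlt_le. apply (Hstep k (sq k) (Hpos k)); auto.
  - destruct (Hcov p) as [N HN].
    + apply Hball. apply (Hstep 0%nat (sq 0%nat) (Hpos 0%nat)). apply (Hp 1%nat).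
    + apply ((proj2 (Hstep N (sq N) (Hpos N))) p (Hp (S N))). auto.
Qed.

Definition good {X} (d : X -> X -> R) T n eps (y : X) k := d (iterT T k y) (iterT T (k + n) y) <= eps.
Definition Eset {X} (d : X -> X -> R) T n eps lam N (y : X) :=
  forall a L, (N <= L)%nat -> lam * INR L <= INR (cnt (good d T n eps y) a L).

Lemma iter_add {X} (T : X -> X) k m z : iterT T k (iterT T m z) = iterT T (k + m) z.
Proof. unfold iterT. rewrite Nat.iter_add. reflexivity. Qed.

Lemma E_closed {X} (d : X -> X -> R) (Hm : is_metric d) T (Hc : is_continuous d T) n eps lam N :
  is_closed d (Eset d T n eps lam N).
Proof.
  pose proof Hm as [Hm0 [Hm1 [Hm2 Hm3]]].
  intros y Hy. unfold Eset in Hy.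
  assert (Hex : exists a L, (N <= L)%nat /\ INR (cnt (good d T n eps y) a L) < lam * INR L).
  { apply NNPP; intros H. apply Hy. intros a L HL. apply Rnot_lt_le. intros H'. apply H; eauto. }
  destruct Hex as [a [L [HL Hlt]]].
  destruct (finite_delta d (fun i y' => ~ good d T n eps y (a + i) -> ~ good d T n eps y' (a + i)) y L) as [de [Hde Hd]].
  { intros i Hi. destruct (classic (good d T n eps y (a + i))) as [Hg|Hg].
    - exists 1; split; [lra|]. tauto.
    - unfold good in Hg. set (k := (a + i)%nat) in *.
      set (g := d (iterT T k y) (iterT T (k + n) y) - eps).
      assert (Hg0 : 0 < g) by (unfold g; lra).
      destruct (iter_cont d T Hc k y (g/2)) as [d1 [Hd1 H1]]; [lra|].
      destruct (iter_cont d T Hc (k+n) y (g/2)) as [d2 [Hd2 H2]]; [lra|].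
      exists (Rmin d1 d2); split; [apply Rmin_glb_lt; auto|].
      intros y' Hy' _ Hg'. unfold good in Hg'.
      assert (A1 := H1 y' (Rlt_le_trans _ _ _ Hy' (Rmin_l _ _))).
      assert (A2 := H2 y' (Rlt_le_trans _ _ _ Hy' (Rmin_r _ _))).
      pose proof (Hm3 (iterT T k y) (iterT T k y') (iterT T (k + n) y)).
      pose proof (Hm3 (iterT T k y') (iterT T (k + n) y') (iterT T (k + n) y)).
      rewrite (Hm2 (iterT T (k + n) y') (iterT T (k + n) y)) in H0. unfold g in *. lra. }
  exists de; split; auto. intros y' Hy' HE. specialize (HE a L HL).
  assert ((cnt (good d T n eps y') a L <= cnt (good d T n eps y) a L)%nat).
  { apply cnt_shift_mono. intros i Hi Hg. apply NNPP. intros Hng. apply (Hd y' Hy' i Hi Hng Hg). }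
  apply le_INR in H. lra.
Qed.

Lemma cover {X} (d : X -> X -> R) (Hm : is_metric d) T n x y eps lam :
  banach_proximal d T x y -> banach_proximal d T x (iterT T n y) -> 0 < eps -> lam < 1 ->
  exists N, Eset d T n eps lam N y.
Proof.
  pose proof Hm as [Hm0 [Hm1 [Hm2 Hm3]]].
  intros H1 H2 He Hl.
  assert (He2 : 0 < eps / 2) by lra. assert (Hl2 : (1 + lam) / 2 < 1) by lra.
  destruct (bd1_cnt _ (H1 (eps/2) He2) ((1 + lam)/2) Hl2) as [N1 [_ HN1]].
  destruct (bd1_cnt _ (H2 (eps/2) He2) ((1 + lam)/2) Hl2) as [N2 [_ HN2]].
  exists (Nat.max N1 N2). intros a L HL.
  specialize (HN1 a L ltac:(lia)). specialize (HN2 a L ltac:(lia)).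
  set (F1 := fun k => d (iterT T k x) (iterT T k y) < eps / 2) in *.
  set (F2 := fun k => d (iterT T k x) (iterT T k (iterT T n y)) < eps / 2) in *.
  assert (Hc : (cnt (fun k => ~ good d T n eps y k) a L <= cnt (fun k => ~ F1 k) a L + cnt (fun k => ~ F2 k) a L)%nat).
  { eapply Nat.le_trans; [|apply cnt_or]. apply cnt_mono. intros k Hk.
    apply NNPP; intros H. apply not_or_and in H. destruct H as [Ha Hb]. apply NNPP in Ha, Hb.
    apply Hk. unfold good. unfold F1, F2 in *. rewrite iter_add in Hb.
    pose proof (Hm3 (iterT T k y) (iterT T k x) (iterT T (k + n) y)). rewrite (Hm2 (iterT T k y) (iterT T k x)) in H. lra. }
  pose proof (cnt_compl (good d T n eps y) L a). pose proof (cnt_compl F1 L a). pose proof (cnt_compl F2 L a).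
  apply le_INR in Hc. rewrite plus_INR in Hc.
  assert (E0 : INR (cnt (good d T n eps y) a L) + INR (cnt (fun k => ~ good d T n eps y k) a L) = INR L) by (rewrite <- plus_INR; f_equal; auto).
  assert (E1 : INR (cnt F1 a L) + INR (cnt (fun k => ~ F1 k) a L) = INR L) by (rewrite <- plus_INR; f_equal; auto).
  assert (E2 : INR (cnt F2 a L) + INR (cnt (fun k => ~ F2 k) a L) = INR L) by (rewrite <- plus_INR; f_equal; auto).
  lra.
Qed.

Lemma uniform {X} (d : X -> X -> R) (Hm : is_metric d) (Hcpt : is_compact d) T (Hc : is_continuous d T)
  (Htrans : is_transitive d T) n (W : X -> Prop) x :
  is_open d W -> (exists y, W y) -> (forall y, W y -> BP d T x y /\ BP d T x (iterT T n y)) ->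
  forall eps, 0 < eps -> forall lam, lam < 1 ->
  exists L, (1 <= L)%nat /\ forall w, lam * INR L <= INR (cnt (good d T n (3 * eps) w) 0 L).
Proof.
  pose proof Hm as [Hm0 [Hm1 [Hm2 Hm3]]].
  intros HW HWne HBP eps He lam Hl.
  destruct (baire d Hm Hcpt W (fun N => Eset d T n eps lam N) HW HWne) as [N [c [r [Hr Hball]]]].
  { intros N; apply E_closed; auto. }
  { intros y Hy. destruct (HBP y Hy). eapply cover; eauto. }
  exists (Nat.max N 1). split; [lia|]. intros w. set (L := Nat.max N 1).
  destruct (finite_delta d (fun i z => d (iterT T i w) (iterT T i z) < eps /\
       d (iterT T (i + n) w) (iterT T (i + n) z) < eps) w L) as [de [Hde Hd]].
  { intros i _. destruct (iter_cont d T Hc i w eps He) as [d1 [Hd1 H1]].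
    destruct (iter_cont d T Hc (i + n) w eps He) as [d2 [Hd2 H2]].
    exists (Rmin d1 d2); split; [apply Rmin_glb_lt; auto|].
    intros z Hz. split; [apply H1|apply H2]; eapply Rlt_le_trans; eauto; [apply Rmin_l|apply Rmin_r]. }
  destruct (Htrans (fun z => d c z < r) (fun z => d w z < de) (ball_open d Hm c r) (ball_open d Hm w de)) with 0%nat
    as [m [_ [z [Hz1 Hz2]]]].
  { exists c. rewrite (proj2 (Hm1 c c) eq_refl). auto. }
  { exists w. rewrite (proj2 (Hm1 w w) eq_refl). auto. }
  specialize (Hball z Hz1 m L ltac:(unfold L; lia)).
  eapply Rle_trans; [exact Hball|]. apply le_INR. apply cnt_shift_mono.
  intros i Hi Hg. destruct (Hd _ Hz2 i Hi) as [A1 A2]. rewrite !iter_add in A1, A2.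
  unfold good in *. simpl Nat.add.
  replace (i + m)%nat with (m + i)%nat in A1 by lia.
  replace (i + n + m)%nat with (m + i + n)%nat in A2 by lia.
  pose proof (Hm3 (iterT T i w) (iterT T (m + i) z) (iterT T (i + n) w)).
  pose proof (Hm3 (iterT T (m + i) z) (iterT T (m + i + n) z) (iterT T (i + n) w)).
  rewrite (Hm2 (iterT T (m + i + n) z) (iterT T (i + n) w)) in H0. lra.
Qed.

Lemma muV_zero {X} (d : X -> X -> R) (Hm : is_metric d) T (Hc : is_continuous d T) n eps
  (Hu : forall lam, lam < 1 -> exists L, (1 <= L)%nat /\ forall w, lam * INR L <= INR (cnt (good d T n (3 * eps) w) 0 L))
  mu : is_invariant_prob d T mu ->
  mu (fun y => 3 * eps < d y (iterT T n y)) = 0.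
Proof.
  pose proof Hm as [Hm0 [Hm1 [Hm2 Hm3]]].
  intros [Hmu Hinv]. set (V := fun y => 3 * eps < d y (iterT T n y)).
  assert (HVo : is_open d V).
  { intros y Hy. unfold V in Hy. set (g := d y (iterT T n y) - 3 * eps).
    assert (0 < g) by (unfold g; lra).
    destruct (iter_cont d T Hc n y (g/2)) as [d1 [Hd1 H1]]; [lra|].
    exists (Rmin d1 (g/2)); split; [apply Rmin_glb_lt; lra|]. intros y' Hy'.
    pose proof (Rmin_l d1 (g/2)). pose proof (Rmin_r d1 (g/2)).
    specialize (H1 y' ltac:(lra)). unfold V.
    pose proof (Hm3 y y' (iterT T n y)) as T1. pose proof (Hm3 y' (iterT T n y') (iterT T n y)) as T2.
    rewrite (Hm2 (iterT T n y') (iterT T n y)) in T2. unfold g in *. lra. }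
  set (A := fun k w => V (iterT T k w)).
  assert (HA : forall k, is_Borel d (A k)) by (intros k; apply Borel_open, preim_open; auto).
  assert (HmuA : forall k, mu (fun w => A k w /\ True) = mu V).
  { intros k. replace (fun w => A k w /\ True) with (A k) by (seteq; tauto).
    induction k.
    - reflexivity.
    - rewrite <- IHk. rewrite <- (Hinv (A k) (HA k)). f_equal. seteq. unfold A, iterT.
      rewrite Nat.iter_succ_r. tauto. }
  assert (H0 : 0 <= mu V) by (apply (mu_nonneg d mu Hmu), Borel_open; auto).
  assert (Hle : forall lam, lam < 1 -> mu V <= 1 - lam).
  { intros lam Hl. destruct (Hu lam Hl) as [L [HL HLw]].
    pose proof (meas_count d mu Hmu L A HA ((1 - lam) * INR L) (fun _ => True) (Borel_True d)) as Hmc.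
    rewrite (rsum_ext _ _ (fun _ => mu V)) in Hmc by (intros; apply HmuA).
    rewrite rsum_const in Hmc. destruct Hmu as [_ [H1 _]]. rewrite H1 in Hmc.
    assert (HLp : 0 < INR L) by (apply lt_0_INR; lia).
    assert (INR L * mu V <= (1 - lam) * INR L * 1).
    { apply Hmc. intros w _. specialize (HLw w).
      assert (Hcm : (cnt (fun k => A k w) 0 L <= cnt (fun k => ~ good d T n (3 * eps) w k) 0 L)%nat).
      { apply cnt_mono. intros k Hk Hg. unfold A, V, good in *. rewrite iter_add in Hk.
        rewrite Nat.add_comm in Hk. lra. }
      pose proof (cnt_compl (good d T n (3 * eps) w) L 0). apply le_INR in Hcm.
      assert (E0 : INR (cnt (good d T n (3 * eps) w) 0 L) + INR (cnt (fun k => ~ good d T n (3 * eps) w k) 0 L) = INR L)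
        by (rewrite <- plus_INR; f_equal; auto).
      lra. }
    nra. }
  destruct (Req_dec (mu V) 0) as [|Hne]; auto.
  specialize (Hle (1 - mu V / 2) ltac:(lra)). lra.
Qed.

Theorem mainTheorem13 (X : Type) (d : X -> X -> R) (T : X -> X)
  (Hmetric : is_metric d) (Hne : inhabited X) (Hcpt : is_compact d)
  (Hcont : is_continuous d T) (Htrans : is_transitive d T)
  (Hsupp : forall n : nat, (1 <= n)%nat -> ~ (forall x, supp d T x <-> Fix T n x)) :
  forall x : X, empty_interior d (BP d T x).
Proof.
  pose proof Hmetric as [Hm0 [Hm1 [Hm2 Hm3]]].
  intros x U HU Hsub y0 Hy0.
  destruct (Htrans U U HU HU (ex_intro _ y0 Hy0) (ex_intro _ y0 Hy0) 1%nat) as [n [Hn [y1 [Hy1 Hy1']]]].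
  set (W := fun y => U y /\ U (iterT T n y)).
  assert (HW : is_open d W).
  { intros y [Ha Hb]. destruct (HU y Ha) as [e1 [He1 H1]].
    destruct (preim_open d T Hcont n U HU y Hb) as [e2 [He2 H2]].
    exists (Rmin e1 e2); split; [apply Rmin_glb_lt; auto|]. intros y' Hy'. split.
    - apply H1. eapply Rlt_le_trans; [exact Hy'|apply Rmin_l].
    - apply H2. eapply Rlt_le_trans; [exact Hy'|apply Rmin_r]. }
  assert (HBP : forall y, W y -> BP d T x y /\ BP d T x (iterT T n y)).
  { intros y [Ha Hb]; split; apply Hsub; auto. }
  apply (Hsupp n Hn). intros z.
  destruct (classic (supp d T z)) as [Hs|Hs]; destruct (classic (Fix T n z)) as [Hf|Hf]; try tauto.
  - exfalso.
    set (D0 := d z (iterT T n z)).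
    assert (HD0 : 0 < D0).
    { destruct (Hm0 z (iterT T n z)) as [Hlt|Heq]; [exact Hlt|].
      exfalso. apply Hf. unfold Fix. symmetry. apply Hm1. auto. }
    set (eps := D0 / 4).
    assert (Heps : 0 < eps) by (unfold eps; lra).
    pose proof (uniform d Hmetric Hcpt T Hcont Htrans n W x HW (ex_intro _ y1 (conj Hy1 Hy1')) HBP eps Heps) as Hu.
    set (V := fun y => 3 * eps < d y (iterT T n y)).
    assert (HVo : is_open d V).
    { intros y Hy. unfold V in Hy. set (g := d y (iterT T n y) - 3 * eps).
      assert (Hg : 0 < g) by (unfold g; lra).
      destruct (iter_cont d T Hcont n y (g/2)) as [d1 [Hd1 H1]]; [lra|].
      exists (Rmin d1 (g/2)); split; [apply Rmin_glb_lt; lra|]. intros y' Hy'.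
      pose proof (Rmin_l d1 (g/2)). pose proof (Rmin_r d1 (g/2)).
      specialize (H1 y' ltac:(lra)). unfold V.
      pose proof (Hm3 y y' (iterT T n y)) as T1. pose proof (Hm3 y' (iterT T n y') (iterT T n y)) as T2.
      rewrite (Hm2 (iterT T n y') (iterT T n y)) in T2. unfold g in *. lra. }
    assert (Hcl : is_closed d (fun y => ~ V y)).
    { intros y Hy. apply NNPP in Hy. destruct (HVo y Hy) as [e [He H]]. exists e; split; [auto|].
      intros y' Hy' Hn'. apply Hn'. auto. }
    assert (Hfull : forall mu, is_invariant_prob d T mu -> mu (fun y => ~ V y) = 1).
    { intros mu Hmu. pose proof (muV_zero d Hmetric T Hcont n eps Hu mu Hmu) as H0.
      destruct Hmu as [Hmu _]. pose proof Hmu as [_ [H1 _]].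
      rewrite <- H1. rewrite (mu_split d mu Hmu (fun _ => True) V (Borel_True d) (Borel_open d V HVo)).
      replace (fun x0 : X => True /\ V x0) with V by (seteq; tauto).
      fold V in H0. rewrite H0. rewrite Rplus_0_l. f_equal. seteq. tauto. }
    apply (Hs (fun y => ~ V y) Hcl Hfull). unfold V, eps. fold D0. lra.
  - exfalso. apply Hs. apply (fix_supp d T n z Hn Hf).
Qed.
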